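(* For integers $k\geq1$ and $n_1,\dots,n_{k}\geq0$, \[ \sum_{\substack{t_1,\dots,t_k\ge0 \\ t_1=t_k=0}} \prod_{i=1}^{k-1} q^{t_{i+1}(n_{i+1} - t_i + t_{i+1})} \begin{bmatrix} n_i+t_i\\ n_i\end{bmatrix}_q \begin{bmatrix} n_i+n_{i+1}\\ n_i+t_i-t_{i+1}\end{bmatrix}_q = \begin{bmatrix} n_1+\cdots+n_{k}\\ n_1,\dots,n_{k}\end{bmatrix}_q. \]
   Context: $[m]_q=1+q+\dots+q^{m-1}$, $[m]_q!=[1]_q\cdots[m]_q$; $\begin{bmatrix} m\\ j\end{bmatrix}_q=\frac{[m]_q!}{[j]_q![m-j]_q!}$ for $0\le j\le m$ and $0$ otherwise; $\begin{bmatrix} n_1+\cdots+n_k\\ n_1,\dots,n_k\end{bmatrix}_q=\frac{[n_1+\cdots+n_k]_q!}{[n_1]_q!\cdots[n_k]_q!}$. The sum is over integer tuples; an empty product equals $1$. *)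

(* Defs.v *)
From HB Require Import structures.
From mathcomp Require Import all_boot all_order all_algebra.
Set Implicit Arguments. Unset Strict Implicit. Unset Printing Implicit Defensive.
Import Order.TTheory GRing.Theory Num.Theory.
Local Open Scope ring_scope.

Section QDefs.
Variable F : fieldType.

Definition qint (q : F) (m : nat) : F := \sum_(i < m) q ^+ i.

Definition qfact (q : F) (m : nat) : F := \prod_(1 <= j < m.+1) qint q j.

Definition qbinom (q : F) (m j : int) : F :=
  if (0 <= j) && (j <= m) then
    qfact q `|m|%N / (qfact q `|j|%N * qfact q `|m - j|%N)
  else 0.

Definition qmultinom (q : F) (ns : seq nat) : F :=
  qfact q (sumn ns) / \prod_(x <- ns) qfact q x.
End QDefs.

Definition tent (k M : nat) (t : k.-tuple 'I_M) (i : nat) : nat :=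
  nth 0%N (map (@nat_of_ord M) t) i.

(* Main.v *)
Require Import Defs.
From HB Require Import structures.
From mathcomp Require Import all_boot all_order all_algebra.
From mathcomp Require Import zify ring lra.
Import Order.TTheory GRing.Theory Num.Theory.
Local Open Scope ring_scope.
Section Path.
Variable F : fieldType.
Variable M : nat.
Variable f : nat -> nat -> nat -> F.

Fixpoint W (j y : nat) : F :=
  match j with
  | 0 => (y == 0%N)%:R
  | j.+1 => \sum_(x < M.+1) W j x * f j x y
  end.

Lemma tent_rcons K (u : K.+1.-tuple 'I_M.+1) z i :
  tent [tuple of rcons u z] i = if (i < K.+1)%N then tent u i else if i == K.+1 then val z else 0%N.
Proof.
rewrite /tent /= map_rcons nth_rcons size_map size_tuple.
case: ltnP => // _; case: eqP => //.
Qed.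

Lemma path_sum K (y : 'I_M.+1) :
  \sum_(t : K.+1.-tuple 'I_M.+1 | (tent t 0 == 0%N) && (tent t K == y))
     \prod_(0 <= i < K) f i (tent t i) (tent t i.+1) = W K y.
Proof.
elim: K y => [|K IH] y.
  pose h := fun z : 'I_M.+1 => [tuple z].
  have hb : bijective h.
    exists (fun t : 1.-tuple 'I_M.+1 => thead t) => [z|t] //.
    by case/tupleP: t => x u; rewrite tuple0; apply: val_inj.
  rewrite (reindex h) /=; last exact: onW_bij.
  rewrite /tent /=.
  under eq_bigr do rewrite big_geq //.
  case: (eqVneq (val y) 0%N) => hy.
    rewrite (big_pred1 y) // => z /=; rewrite -hy.
    by apply/idP/idP => [/andP [_ e] | e]; [exact: e | apply/andP; split; exact: e].
  rewrite (eq_bigl xpred0) ?big_pred0_eq // => z /=; apply/negP => /andP [/eqP a /eqP b].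
  by move: hy; change (nat_of_ord y != 0%N -> False); rewrite -b a.
pose h := fun p : K.+1.-tuple 'I_M.+1 * 'I_M.+1 => [tuple of rcons p.1 p.2].
have hb : bijective h.
  exists (fun t : K.+2.-tuple 'I_M.+1 =>
     ([tuple of belast (thead t) (behead t)], last (thead t) (behead t))).
    case=> u z; case/tupleP: u => x u /=.
    have hx : thead (h ([tuple of x :: u], z)) = x by rewrite /thead (tnth_nth x).
    rewrite hx; congr pair; last by rewrite last_rcons.
    by apply: val_inj => /=; rewrite belast_rcons.
  case/tupleP=> x u; apply: val_inj; rewrite /h /=.
  by rewrite -lastI.
rewrite (reindex h) /=; last exact: onW_bij.
transitivity (\sum_(u : K.+1.-tuple 'I_M.+1 | tent u 0 == 0%N) \sum_(z | z == y)
   \prod_(0 <= i < K.+1) f i (tent (h (u, z)) i) (tent (h (u, z)) i.+1)).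
  rewrite pair_big; apply: eq_bigl => -[u z] /=.
  rewrite /h !tent_rcons /= ltnn eqxx.
  by [].
transitivity (\sum_(u : K.+1.-tuple 'I_M.+1 | tent u 0 == 0%N)
   ((\prod_(0 <= i < K) f i (tent u i) (tent u i.+1)) * f K (tent u K) y)).
  apply: eq_bigr => u _; rewrite (big_pred1 y) // big_nat_recr //=.
  rewrite /h !tent_rcons ltnSn ltnn eqxx; congr (_ * _).
  apply: eq_big_nat => i /andP [_ hi].
  have h1 : (i < K.+1)%N by lia. have h2 : (i.+1 < K.+1)%N by lia. by rewrite !tent_rcons h1 h2.
have htu : forall u : K.+1.-tuple 'I_M.+1, tent u K = nth ord0 u K.
  by move=> u; rewrite /tent (nth_map ord0) // size_tuple.
rewrite (partition_big (fun u : K.+1.-tuple 'I_M.+1 => nth ord0 u K) xpredT) //=.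
apply: eq_bigr => x _; rewrite -IH mulr_suml.
apply: eq_big => u; first by rewrite htu.
by move=> /andP [_ /eqP e]; rewrite htu e.
Qed.
End Path.
Section Q.
Variable F : fieldType.
Variable q : F.
Hypothesis hq : forall m : nat, (0 < m)%N -> qint q m != 0.

Lemma qint_add a b : qint q (a + b) = qint q a + q ^+ a * qint q b.
Proof.
rewrite /qint big_split_ord /= mulr_sumr; congr (_ + _).
by apply: eq_bigr => i _; rewrite exprD.
Qed.

Lemma qf0 : qfact q 0 = 1.
Proof. by rewrite /qfact big_geq. Qed.

Lemma qfS m : qfact q m.+1 = qfact q m * qint q m.+1.
Proof. by rewrite /qfact big_nat_recr. Qed.

Lemma qf_neq0 m : qfact q m != 0.
Proof.
elim: m => [|m IH]; first by rewrite qf0 oner_neq0.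
by rewrite qfS mulf_neq0 // hq.
Qed.

Definition gb (m j : nat) : F :=
  if (j <= m)%N then qfact q m / (qfact q j * qfact q (m - j)) else 0.

Lemma gb_n0 m : gb m 0 = 1.
Proof. by rewrite /gb /= subn0 qf0 mul1r divff // qf_neq0. Qed.

Lemma gb_nn m : gb m m = 1.
Proof. by rewrite /gb leqnn subnn qf0 mulr1 divff // qf_neq0. Qed.

Lemma gb_gt {m j} : (m < j)%N -> gb m j = 0.
Proof. by rewrite /gb ltnNge => /negbTE ->. Qed.

Lemma gb_neq0 m j : (j <= m)%N -> gb m j != 0.
Proof.
move=> h; rewrite /gb h mulf_neq0 ?invr_eq0 ?mulf_neq0 //; exact: qf_neq0.
Qed.

Lemma gb_sym m j : (j <= m)%N -> gb m j = gb m (m - j).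
Proof.
move=> h; by rewrite /gb h leq_subr subKn // [qfact q j * _]mulrC.
Qed.

Lemma gb_pascal n j : gb n.+1 j.+1 = gb n j.+1 + q ^+ (n - j) * gb n j.
Proof.
case: (ltngtP j n) => [hlt|hgt|->]; last first.
- by rewrite gb_nn gb_gt // subnn expr0 mul1r gb_nn add0r.
- by rewrite !gb_gt ?mulr0 ?addr0 // ltnW.
have [a ->] : exists a, n = (j + a.+1)%N by exists (n - j.+1)%N; lia.
rewrite /gb.
rewrite !ifT; try lia.
have -> : (j + a.+1 - j.+1 = a)%N by lia.
have -> : (j + a.+1 - j = a.+1)%N by lia.
have -> : ((j + a.+1).+1 - j.+1 = a.+1)%N by lia.
rewrite (qfS (j + a.+1)) (qfS j) (qfS a).
have -> : ((j + a.+1).+1 = a.+1 + j.+1)%N by lia.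
rewrite qint_add addnC.
have h1 := qf_neq0 (j + a.+1); have h2 := qf_neq0 j; have h3 := qf_neq0 a.
have h4 : qint q j.+1 != 0 by apply: hq.
have h5 : qint q a.+1 != 0 by apply: hq.
rewrite exprS.
field.
by rewrite h2 h3 h4 h5.
Qed.

Lemma gb_tri m c s : (c <= m)%N -> gb m (c + s) * gb (c + s) c = gb m c * gb (m - c) s.
Proof.
move=> hc; case: (leqP (c + s) m) => h; last first.
  have h' : (m - c < s)%N by lia.
  by rewrite (gb_gt h) (gb_gt h') mul0r mulr0.
rewrite /gb h hc leq_addr.
have -> : (m - c - s = m - (c + s))%N by lia.
have -> : (s <= m - c)%N by lia.
rewrite addKn.
have h1 := qf_neq0 (m - (c+s)); have h2 := qf_neq0 c; have h3 := qf_neq0 s.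
have h4 := qf_neq0 (c+s); have h5 := qf_neq0 (m - c).
field.
by rewrite h1 h2 h3 h4 h5.
Qed.

Lemma vdm A B m :
  \sum_(0 <= t < m.+1) q ^+ (t * (B - (m - t))) * gb A t * gb B (m - t) = gb (A + B) m.
Proof.
elim: A m => [|A IH] m.
  rewrite big_nat_recl // big1_seq ?addr0 /=.
    by rewrite mul0n expr0 mul1r gb_n0 subn0 mul1r add0n.
  by move=> i _; rewrite gb_gt ?mulr0 ?mul0r.
case: m => [|m].
  by rewrite big_nat1 expr0 mul1r !gb_n0 mulr1.
rewrite addSn gb_pascal -!IH.
rewrite big_nat_recl // [X in _ = X + _]big_nat_recl //.
rewrite /= !mul0n !expr0 !mul1r !gb_n0 !mul1r -addrA; congr (_ + _).
rewrite mulr_sumr -big_split /=; apply: eq_big_nat => i /andP [_ hi].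
rewrite subSS gb_pascal mulrDr mulrDl; congr (_ + _).
case: (leqP i A) => hA; last by rewrite (gb_gt hA) ?mulr0 ?mul0r ?mulr0.
case: (leqP (m - i) B) => hB; last by rewrite (gb_gt hB) !mulr0.
rewrite mulrA -exprD !mulrA -exprD; congr (_ ^+ _ * _ * _).
have [x hx] : exists x, (B - (m - i) = x)%N by eexists.
rewrite hx.
have -> : (A + B - m = (A - i) + x)%N by lia.
rewrite mulSn; lia.
Qed.
Definition g b c t s :=
  if (s <= b + t)%N && (t <= c + s)%N then
    q ^+ (s * (c + s - t)) * gb (b + t) b * gb (b + c) (b + t - s) else 0.

Lemma qbinom_nat m j : (j <= m)%N -> qbinom q m%:Z j%:Z = gb m j.
Proof.
move=> h; rewrite /qbinom /gb h.
have -> : (0 <= j%:Z) && (j%:Z <= m%:Z) by apply/andP; split; lia.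
by rewrite subzn.
Qed.

Lemma factor_eq b c t s :
  q ^ ((s)%:Z * ((c)%:Z - (t)%:Z + (s)%:Z)) * qbinom q (b + t)%N%:Z (b)%:Z
    * qbinom q (b + c)%N%:Z ((b + t)%N%:Z - (s)%:Z) = g b c t s.
Proof.
rewrite /g qbinom_nat ?leq_addr //.
case: ifP => [/andP [h1 h2] | h].
  rewrite (subzn h1) qbinom_nat; last by lia.
  have -> : (c%:Z - t%:Z + s%:Z) = (c + s - t)%N%:Z by lia.
  by rewrite -PoszM.
rewrite /qbinom.
have -> : (0 <= (b + t)%N%:Z - s%:Z) && ((b + t)%N%:Z - s%:Z <= (b + c)%N%:Z) = false.
  apply/negbTE/negP => /andP [h1 h2]; move/negbT: h; rewrite negb_and; lia.
by rewrite mulr0.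
Qed.

Lemma sum_cut (G : nat -> F) L X : (L <= X)%N -> (forall t, (L <= t < X)%N -> G t = 0) ->
  \sum_(0 <= t < X) G t = \sum_(0 <= t < L) G t.
Proof.
move=> hX hG; rewrite (big_cat_nat (leq0n L) hX) /= [X in _ + X]big_nat_cond [X in _ + X]big1 ?addr0 //.
by move=> t /andP [h _]; exact: hG.
Qed.

Variable n : nat -> nat.
Variable M : nat.

Definition NS j := (\sum_(i < j) n i)%N.
Definition MN j := qmultinom q [seq n i | i <- iota 0 j.+1].

Lemma sumn_NS m : sumn [seq n i | i <- iota 0 m] = NS m.
Proof.
by rewrite sumnE big_map /NS -(big_mkord xpredT) /index_iota subn0.
Qed.

Lemma prod_neq0 s : \prod_(x <- s) qfact q x != 0.
Proof. by rewrite prodf_seq_neq0; apply/allP => x _; exact: qf_neq0. Qed.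

Lemma MN0 : MN 0 = 1.
Proof. by rewrite /MN /qmultinom /= big_seq1 addn0 divff // qf_neq0. Qed.

Lemma MNS j : MN j.+1 = MN j * gb (NS j.+2) (n j.+1).
Proof.
rewrite /MN /qmultinom !sumn_NS.
have -> : iota 0 j.+2 = iota 0 j.+1 ++ [:: j.+1] by rewrite -addn1 iotaD.
rewrite map_cat [map _ [:: _]]/=.
have -> : \prod_(x <- [seq n i | i <- iota 0 j.+1] ++ [:: n j.+1]) qfact q x =
  (\prod_(x <- [seq n i | i <- iota 0 j.+1]) qfact q x) * qfact q (n j.+1).
  by rewrite big_cat big_seq1.
have -> : NS j.+2 = (NS j.+1 + n j.+1)%N by rewrite /NS big_ord_recr.
rewrite /gb leq_addl addnK.
have h1 := prod_neq0 [seq n i | i <- iota 0 j.+1].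
have h2 := qf_neq0 (NS j.+1); have h3 := qf_neq0 (n j.+1).
field.
by rewrite h1 h3 h2.
Qed.

Definition ff := fun i x y => g (n i) (n i.+1) x y.

Lemma closed j y : (NS j <= M)%N ->
  W F M ff j y = q ^+ (y * (n j + y)) * MN j * gb (NS j) y / gb (n j + y) (n j).
Proof.
elim: j y => [|j IH] y hN.
  rewrite /= MN0 /NS big_ord0; case: y => [|y].
    by rewrite eqxx mul0n expr0 !mul1r gb_n0 addn0 gb_nn divff // oner_neq0.
  by rewrite gb_gt // mulr0 mul0r.
have hN' : (NS j <= M)%N by move: hN; rewrite /NS big_ord_recr /=; lia.
have -> : W F M ff j.+1 y = \sum_(x < M.+1) W F M ff j x * ff j x y by [].
set A := NS j; set b := n j; set c := n j.+1.
pose H x := if (x <= c + y)%N then q ^+ (x * ((b + c) - ((c + y) - x))) * gb A x * gb (b + c) ((c + y) - x) else 0.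
transitivity (\sum_(x < M.+1) MN j * q ^+ (y * (c + y)) * H x).
  apply: eq_bigr => x _; rewrite IH // /ff /g /H -/b -/c.
  case: (boolP (x <= c + y)%N) => hx; last by rewrite andbF !mulr0.
  case: (boolP (y <= b + x)%N) => hs; last first.
    rewrite /= mulr0 (@gb_gt (b + c)) ?mulr0 //; lia.
  rewrite /=.
  have e1 : ((b + c) - ((c + y) - x) = b + x - y)%N by lia.
  have e2 : gb (b + c) ((c + y) - x) = gb (b + c) (b + x - y).
    rewrite (gb_sym (b + c) (b + x - y)); last by lia.
    congr (gb _ _); lia.
  have e3 : q ^+ (x * (b + x)) * q ^+ (y * (c + y - x)) = q ^+ (y * (c + y)) * q ^+ (x * (b + x - y)).
    rewrite -!exprD; congr (_ ^+ _); nia.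
  rewrite e1 e2.
  have hw : gb (b + x) b != 0 by apply: gb_neq0; lia.
  transitivity (q ^+ (x * (b + x)) * q ^+ (y * (c + y - x)) * (MN j * gb A x * gb (b + c) (b + x - y))).
    by field.
  by rewrite e3; ring.
rewrite -mulr_sumr.
have hsum : \sum_(x < M.+1) H x = gb (A + (b + c)) (c + y).
  rewrite -(big_mkord xpredT H) -vdm.
  pose L := (minn A (c + y)).+1.
  rewrite (@sum_cut H L); last first.
    move=> t /andP [ht _]; rewrite /H; case: ifP => // h.
    rewrite gb_gt ?mulr0 ?mul0r //; lia.
    rewrite /L; lia.
  rewrite [RHS](@sum_cut _ L); last first.
    move=> t /andP [ht ht2]; rewrite gb_gt ?mulr0 ?mul0r //; lia.
    rewrite /L; lia.
  apply: eq_big_nat => t /andP [_ ht]; rewrite /H ifT //; rewrite /L in ht; lia.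
rewrite hsum MNS.
have -> : NS j.+2 = (A + b + c)%N by rewrite /NS !big_ord_recr.
have -> : NS j.+1 = (A + b)%N by rewrite /NS !big_ord_recr.
have hW : gb (c + y) c != 0 by apply: gb_neq0; lia.
have hX : gb (A + (b + c)) (c + y) = gb (A + b + c) c * gb (A + b) y / gb (c + y) c.
  apply: (canRL (mulfK hW)); rewrite addnA gb_tri; last by lia.
  by rewrite addnK.
rewrite hX; field.
by rewrite hW.
Qed.
End Q.

Theorem lemma4p2 (F : fieldType) (q : F)
    (hq : forall m : nat, (0 < m)%N -> qint q m != 0)
    (k : nat) (hk : (1 <= k)%N) (n : nat -> nat)
    (M : nat) (hM : (\sum_(i < k) n i <= M)%N) :
  \sum_(t : k.-tuple 'I_M.+1 | (tent t 0 == 0%N) && (tent t k.-1 == 0%N))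
     \prod_(0 <= i < k.-1)
        (q ^ ((tent t i.+1)%:Z * ((n i.+1)%:Z - (tent t i)%:Z + (tent t i.+1)%:Z))
         * qbinom q (n i + tent t i)%N%:Z (n i)%:Z
         * qbinom q (n i + n i.+1)%N%:Z ((n i + tent t i)%N%:Z - (tent t i.+1)%:Z))
  = qmultinom q [seq n i | i <- iota 0 k].
Proof.
case: k hk hM => // K _ hM /=.
transitivity (\sum_(t : K.+1.-tuple 'I_M.+1 | (tent t 0 == 0%N) && (tent t K == (@ord0 M)))
     \prod_(0 <= i < K) ff F q n i (tent t i) (tent t i.+1)).
  apply: eq_big => // t _; apply: eq_bigr => i _.
  by rewrite factor_eq.
rewrite path_sum closed //.
  rewrite (_ : nat_of_ord (@ord0 M) = 0%N) //.
  by rewrite mul0n expr0 mul1r gb_n0 // mulr1 addn0 gb_nn // divr1.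
apply: (@leq_trans (\sum_(i < K.+1) n i)) hM; rewrite /NS big_ord_recr /=; exact: leq_addr.
Qed.
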